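(* Let $\Gamma$ be a nonempty set and $\mathcal{S}$ a family of subsets of $\Gamma$ containing all singletons of $\Gamma$. For $s\in\mathcal{S}$ let $s^*\in J\mathcal{S}^*$ be the functional determined by $s^*(\phi)=\sum_{a\in s}\phi(a)$ for finitely supported $\phi$, and let $D=\{\sum_{i=1}^n\lambda_i s_i^*: n\in\mathbb{N},\ \lambda_i\in\mathbb{R},\ s_i\in\mathcal{S},\ s_1,\dots,s_n \text{ pairwise disjoint},\ \sum_{i=1}^n\lambda_i^2\le1\}$. Then the $w^*$-closure of $D$ contains all extreme points of the closed unit ball of $J\mathcal{S}^*$.
   Context: For a finitely supported function $\phi:\Gamma\to\mathbb{R}$, the James-$\mathcal{S}$ norm is $\|\phi\|=\sup\big(\sum_{i=1}^n(\sum_{a\in s_i}\phi(a))^2\big)^{1/2}$, the supremum over all finite families of pairwise disjoint elements $s_1,\dots,s_n$ of $\mathcal{S}$; $J\mathcal{S}$ is the completion of the finitely supported real functions on $\Gamma$ in this norm. One has $\|s^*\|\le1$ and $D$ lies in the unit ball of $J\mathcal{S}^*$. *)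

(* Defs.v *)
From HB Require Import structures.
From mathcomp Require Import all_boot all_order all_algebra.
From mathcomp Require Import all_classical all_reals all_analysis.
Set Implicit Arguments. Unset Strict Implicit. Unset Printing Implicit Defensive.
Import Order.TTheory GRing.Theory Num.Theory.
Import numFieldNormedType.Exports.
Local Open Scope classical_set_scope.
Local Open Scope ring_scope.

(* Functionals on JS are represented through their restriction to the dense
   subspace c00(Gamma) of finitely supported real functions. *)
Section JamesS.
Variables (R : realType) (Gamma : Type).

Definition fsfun : Type := {phi : Gamma -> R | finite_set [set a | phi a != 0]}.

Definition ssum (s : set Gamma) (phi : fsfun) : R :=
  \sum_(a \in (s : set {classic Gamma})) (proj1_sig phi) a.

Definition disj_family (S : set (set Gamma)) (n : nat) (s : 'I_n -> set Gamma) :=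
  (forall i, S (s i)) /\ (forall i j, i != j -> s i `&` s j = set0).

Definition JSnorm (S : set (set Gamma)) (phi : fsfun) : R :=
  Num.sqrt (sup [set x : R | exists n (s : 'I_n -> set Gamma),
     disj_family S s /\ x = \sum_(i < n) (ssum (s i) phi) ^+ 2]).

Definition lin_functional (f : fsfun -> R) :=
  forall (c : R) (phi psi chi : fsfun),
    (forall a, proj1_sig chi a = c * proj1_sig phi a + proj1_sig psi a) ->
    f chi = c * f phi + f psi.

Definition dual_ball (S : set (set Gamma)) : set (fsfun -> R) :=
  [set f | lin_functional f /\ forall phi, `|f phi| <= JSnorm S phi].

Definition extreme_point (B : set (fsfun -> R)) (f : fsfun -> R) :=
  B f /\ forall g h (t : R), B g -> B h -> 0 < t < 1 ->
    f = (fun phi => t * g phi + (1 - t) * h phi) -> g = h.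

Definition sstar (s : set Gamma) : fsfun -> R := fun phi => ssum s phi.

Definition Dset (S : set (set Gamma)) : set (fsfun -> R) :=
  [set f | exists n (lam : 'I_n -> R) (s : 'I_n -> set Gamma),
     [/\ disj_family S s, \sum_(i < n) lam i ^+ 2 <= 1 &
         f = (fun phi => \sum_(i < n) lam i * sstar (s i) phi)]].

Definition wstar_closure (A : set (fsfun -> R)) : set (fsfun -> R) :=
  @closure {ptws fsfun -> R} A.

End JamesS.

(* Main.v *)
Require Import Defs.
From HB Require Import structures.
From mathcomp Require Import all_boot all_order all_algebra.
From mathcomp Require Import all_classical all_reals all_analysis.
From mathcomp Require Import ring lra.
Set Implicit Arguments. Unset Strict Implicit. Unset Printing Implicit Defensive.
Import Order.TTheory GRing.Theory Num.Theory.
Import numFieldNormedType.Exports.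
Local Open Scope classical_set_scope.
Local Open Scope ring_scope.
Section A.
Variables (R : realType) (Gamma : Type).
Local Notation fs := (fsfun R Gamma).
Local Notation E := {ptws fs -> R}.
Definition Udisc := discrete_topology (classicType fs).

Fixpoint inl (x : fs) (L : seq fs) : Prop :=
  if L is y :: L' then y = x \/ inl x L' else False.

Lemma inl_app x L1 L2 : inl x L1 \/ inl x L2 -> inl x (L1 ++ L2).
Proof.
elim: L1 => [|y L1 IH] /=; first by case.
by case=> [[->|H]|H]; [left|right; apply: IH; left|right; apply: IH; right].
Qed.

Definition Ball (g : E) (L : seq fs) (e : R) : set E :=
  [set h : E | forall phi, inl phi L -> `|h phi - g phi| < e].

Lemma eval_cont (phi : fs) : continuous (fun g : E => g phi).
Proof.
move=> g.
have := (@pointwise_cvgP Udisc R (nbhs g) g _).1 (@cvg_id _ (nbhs g)) phi.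
exact.
Qed.

Lemma cont_sum (T : topologicalType) (I : Type) (r : seq I) (F : I -> T -> R) :
  (forall i, continuous (F i)) -> continuous (fun x => \sum_(i <- r) F i x).
Proof.
move=> cF; elim: r => [|i r IH].
  have -> : (fun x : T => \sum_(i <- [::]) F i x) = fun _ => 0.
    by apply: funext => x; rewrite big_nil.
  exact: cst_continuous.
have -> : (fun x : T => \sum_(j <- i :: r) F j x) = (fun x => F i x + \sum_(j <- r) F j x).
  by apply: funext => x; rewrite big_cons.
by move=> x; apply: cvgD; [exact: cF | exact: IH].
Qed.

Lemma FnE (g : E) : Filter (nbhs g).
Proof. exact: (@nbhs_filter E g). Qed.

Lemma Ball_nbhs (g : E) L e : 0 < e -> nbhs g (Ball g L e).
Proof.
move=> e0; elim: L => [|phi L IH].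
  have -> : Ball g [::] e = setT by apply/seteqP; split => // h _ phi [].
  exact: (@filterT _ (nbhs g) (@nbhs_filter E g)).
have h1 : nbhs g [set h : E | `|h phi - g phi| < e].
  have H := @eval_cont phi g.
  have := H _ (nbhsx_ballx (g phi) e e0).
  apply: (@filterS _ _ (FnE g)) => h /=; rewrite /ball /= distrC; exact.
apply: (@filterS _ _ (FnE g) _ _ _ (@filterI _ _ (FnE g) _ _ h1 IH)) => h [h1' h2] psi [<-|].
  exact: h1'.
exact: h2.
Qed.

Lemma nbhs_Ball (g : E) W : nbhs g W ->
  exists L e, 0 < e /\ Ball g L e `<=` W.
Proof.
pose G := filter_from [set p : seq fs * R | 0 < p.2] (fun p => Ball g p.1 p.2).
have FG : Filter G.
  apply: filter_from_filter; first by exists ([::], 1) => /=.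
  move=> [L1 e1] [L2 e2] /= e10 e20; exists (L1 ++ L2, Num.min e1 e2).
    by rewrite /= lt_min e10 e20.
  move=> h /= Hh; split => phi Hphi.
    apply: (lt_le_trans (Hh phi _)); first by apply: inl_app; left.
    by rewrite ge_min lexx.
  apply: (lt_le_trans (Hh phi _)); first by apply: inl_app; right.
  by rewrite ge_min lexx orbT.
have : G `=>` nbhs g.
  apply/(@pointwise_cvgP Udisc R G g FG) => t V /nbhs_ballP [e e0 He].
  exists ([:: t], e) => //= h Hh; apply: He; rewrite /ball /= distrC.
  by apply: Hh; left.
move=> GW /GW [[L e] /= e0 HB]; by exists L, e.
Qed.

End A.
Section B.
Variables (R : realType) (Gamma : Type).
Local Notation fs := (fsfun R Gamma).
Local Notation Gc := (classicType Gamma).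
Local Notation "'v' phi" := (proj1_sig phi) (at level 10).

Definition supp (phi : fs) : set Gc := [set a | v phi a != 0].

Lemma ssum_list (s : set Gamma) (phi : fs) (r : seq Gc) : uniq r ->
  (forall a, v phi a != 0 -> a \in r) ->
  ssum s phi = \sum_(a <- r) (if a \in (s : set Gc) then v phi a else 0).
Proof.
move=> ur Hr; rewrite /ssum fsbig_mkcond (fsbigE r) //.
  by apply: eq_bigl => a; rewrite in_setT.
move=> a _ anr; rewrite /patch; case: ifP => // _.
by apply/eqP; apply: contraNT anr => /Hr.
Qed.

Lemma in_ff (A : set Gc) a : finite_set A ->
  (a \in finmap.enum_fset (fset_set A)) = (a \in A).
Proof. move=> fA; exact: in_fset_set. Qed.

Lemma supp_fin (phi : fs) : finite_set (supp phi).
Proof. exact: (proj2_sig phi). Qed.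

Lemma ssum_lin (s : set Gamma) : lin_functional (@sstar R Gamma s).
Proof.
move=> c phi psi chi Hchi; rewrite /sstar.
set r : seq Gc := finmap.enum_fset (fset_set (supp phi `|` supp psi)).
have fU : finite_set (supp phi `|` supp psi) by rewrite finite_setU; split; exact: supp_fin.
have ur : uniq r by exact: finmap.fset_uniq.
have Hphi : forall a, v phi a != 0 -> a \in r.
  by move=> a Ha; rewrite /r in_ff // inE; left.
have Hpsi : forall a, v psi a != 0 -> a \in r.
  by move=> a Ha; rewrite /r in_ff // inE; right.
have Hchi' : forall a, v chi a != 0 -> a \in r.
  move=> a; rewrite Hchi => Ha; rewrite /r in_ff // inE.
  case: (boolP (v phi a == 0)) => [/eqP H0|H0]; last by left.
  by right; move: Ha; rewrite H0 mulr0 add0r.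
rewrite (ssum_list s ur Hphi) (ssum_list s ur Hpsi) (ssum_list s ur Hchi').
rewrite mulr_sumr -big_split /=; apply: eq_bigr => a _.
by case: ifP => _; rewrite ?Hchi ?mulr0 ?addr0.
Qed.

Lemma sq_sum_le (I : finType) (b : I -> R) : (forall i, 0 <= b i) ->
  \sum_i b i ^+ 2 <= (\sum_i b i) ^+ 2.
Proof.
move=> b0; rewrite expr2 mulr_suml; apply: ler_sum => i _.
rewrite expr2; apply: ler_wpM2l => //.
by rewrite (bigD1 i) //= lerDl sumr_ge0.
Qed.

Lemma disj_bound (S : set (set Gamma)) (phi : fs) n (s : 'I_n -> set Gamma) :
  disj_family S s ->
  \sum_(i < n) (ssum (s i) phi) ^+ 2 <=
  (\sum_(a <- finmap.enum_fset (fset_set (supp phi))) `|v phi a|) ^+ 2.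
Proof.
move=> [_ Hd]; set r : seq Gc := finmap.enum_fset (fset_set (supp phi)).
have ur : uniq r by exact: finmap.fset_uniq.
have Hr : forall a, v phi a != 0 -> a \in r by move=> a Ha; rewrite /r in_ff; [exact/mem_set | exact: supp_fin].
pose b i := \sum_(a <- r) (if a \in (s i : set Gc) then `|v phi a| else 0).
have b0 i : 0 <= b i by apply: sumr_ge0 => a _; case: ifP.
have ab i : (ssum (s i) phi) ^+ 2 <= b i ^+ 2.
  rewrite -real_normK ?num_real // lerXn2r ?nnegrE ?normr_ge0 //.
  rewrite (ssum_list _ ur Hr); apply: le_trans (ler_norm_sum _ _ _) _.
  by apply: ler_sum => a _; case: ifP => _; rewrite ?normr0.
apply: le_trans (ler_sum _ (fun i _ => ab i)) _.
apply: le_trans (sq_sum_le b0) _.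
have sb0 : 0 <= \sum_i b i by apply: sumr_ge0.
have sr0 : 0 <= \sum_(a <- r) `|v phi a| by apply: sumr_ge0 => a _; exact: normr_ge0.
rewrite lerXn2r ?nnegrE //.
rewrite /b exchange_big /=; apply: ler_sum => a _.
have [[i ai]|nai] := pselect (exists i, a \in (s i : set Gc)).
  rewrite (bigD1 i) //= ai big1 ?addr0 // => j ji; case: ifP => // aj.
  exfalso; have := Hd i j; rewrite eq_sym ji => /(_ isT) /seteqP [+ _].
  by move=> /(_ a); apply; split; apply/set_mem.
rewrite big1 ?normr_ge0 // => i _; case: ifP => // ai; exfalso; apply: nai; by exists i.
Qed.

End B.
Section B2.
Variables (R : realType) (Gamma : Type) (S : set (set Gamma)).
Local Notation fs := (fsfun R Gamma).
Local Notation Gc := (classicType Gamma).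
Local Notation "'v' phi" := (proj1_sig phi) (at level 10).

Definition JX (phi : fs) := [set x : R | exists n (s : 'I_n -> set Gamma),
     disj_family S s /\ x = \sum_(i < n) (ssum (s i) phi) ^+ 2].

Lemma JSnormE (phi : fs) : JSnorm S phi = Num.sqrt (sup (JX phi)).
Proof. by []. Qed.

Lemma disj0 : disj_family S (fun i : 'I_0 => set0).
Proof. by split; case. Qed.

Lemma JX0 (phi : fs) : JX phi 0.
Proof. by exists 0%N, (fun _ => set0); split; [exact: disj0 | rewrite big_ord0]. Qed.

Lemma JX_has_sup (phi : fs) : has_sup (JX phi).
Proof.
split; first by exists 0; exact: JX0.
exists ((\sum_(a <- finmap.enum_fset (fset_set (supp phi))) `|v phi a|) ^+ 2).
by rewrite /ubound /= => x; rewrite /JX /= => -[n [s [Hs ->]]]; exact: (disj_bound phi Hs).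
Qed.

Lemma prod_le1 n (lam w : 'I_n -> R) : \sum_i lam i ^+ 2 <= 1 ->
  \sum_i w i ^+ 2 = 1 -> \sum_i lam i * w i <= 1.
Proof.
move=> H1 H2.
have : 2 * \sum_i lam i * w i <= \sum_i lam i ^+ 2 + \sum_i w i ^+ 2.
  rewrite mulr_sumr -big_split /=; apply: ler_sum => i _.
  have := sqr_ge0 (lam i - w i); rewrite sqrrB; lra.
lra.
Qed.

Lemma CS n (lam a : 'I_n -> R) : \sum_i lam i ^+ 2 <= 1 ->
  `|\sum_i lam i * a i| <= Num.sqrt (\sum_i a i ^+ 2).
Proof.
move=> H1; set t := Num.sqrt _.
have s0 : 0 <= \sum_i a i ^+ 2 by apply: sumr_ge0 => i _; exact: sqr_ge0.
have [t0|tpos] := eqVneq t 0.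
  have : \sum_i a i ^+ 2 = 0 by apply/eqP; rewrite eq_le s0 andbT -sqrtr_eq0 -/t t0.
  move/eqP; rewrite psumr_eq0; last by move=> i _; exact: sqr_ge0.
  move=> /allP Ha; rewrite big1 ?normr0 ?t0 // => i _.
  by have := Ha i (mem_index_enum i); rewrite sqrf_eq0 => /eqP ->; rewrite mulr0.
have t_gt0 : 0 < t by rewrite lt_neqAle eq_sym tpos sqrtr_ge0.
pose w i := a i / t.
have aw i : a i = t * w i by rewrite /w mulrC divfK.
have Hw : \sum_i w i ^+ 2 = 1.
  rewrite /w; under eq_bigr do rewrite expr_div_n.
  rewrite -mulr_suml -[X in _ / X]/(t ^+ 2) sqr_sqrtr // divff //.
  by move: tpos; rewrite /t; apply: contraNneq => ->; rewrite sqrtr0.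
have E1 : \sum_i lam i * a i = t * \sum_i lam i * w i.
  by rewrite mulr_sumr; apply: eq_bigr => i _; rewrite aw mulrCA.
have u1 := prod_le1 H1 Hw.
have u2 : \sum_i (- lam i) * w i <= 1.
  by apply: prod_le1 Hw; under eq_bigr do rewrite sqrrN.
have u2' : - 1 <= \sum_i lam i * w i.
  by move: u2; under eq_bigr do rewrite mulNr; rewrite sumrN lerNl.
by rewrite E1 normrM gtr0_norm // -[X in _ <= X]mulr1 ler_pM2l // ler_norml u2' u1.
Qed.

Lemma le_JS (phi : fs) n (s : 'I_n -> set Gamma) : disj_family S s ->
  Num.sqrt (\sum_(i < n) (ssum (s i) phi) ^+ 2) <= JSnorm S phi.
Proof.
move=> Hs; rewrite JSnormE ler_sqrt; last first.
  apply: le_trans (sup_upper_bound (JX_has_sup phi) (JX0 phi)); exact: lexx.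
apply: sup_upper_bound; first exact: JX_has_sup.
by exists n, s.
Qed.

Lemma D_in_B : @Dset R Gamma S `<=` @dual_ball R Gamma S.
Proof.
move=> d [n [lam [s [Hs Hlam ->]]]]; split.
  move=> c phi psi chi Hchi.
  rewrite mulr_sumr -big_split /=; apply: eq_bigr => i _.
  rewrite (@ssum_lin R Gamma (s i) c phi psi chi Hchi); lra.
move=> phi; apply: le_trans (CS _ Hlam) _; exact: le_JS.
Qed.

Lemma sup_D (psi : fs) (beta : R) :
  (forall d, @Dset R Gamma S d -> d psi <= beta) -> JSnorm S psi <= beta.
Proof.
move=> Hd.
have b0 : 0 <= beta.
  apply: le_trans (Hd (fun phi => \sum_(i < 0) 0 * sstar set0 phi) _).
    by rewrite big_ord0.
  exists 0%N, (fun _ => 0), (fun _ => set0); split; first exact: disj0.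
    by rewrite big_ord0.
  done.
rewrite JSnormE -(ger0_norm b0) -sqrtr_sqr ler_sqrt ?sqr_ge0 //.
apply: ge_sup; first by exists 0; exact: JX0.
move=> x [n [s [Hs ->]]]; set y := \sum_(i < n) _.
have y0 : 0 <= y by apply: sumr_ge0 => i _; exact: sqr_ge0.
have [->|yn0] := eqVneq y 0; first exact: sqr_ge0.
set t := Num.sqrt y.
have t0 : 0 < t by rewrite sqrtr_gt0 lt_neqAle eq_sym yn0 y0.
pose lam i := ssum (s i) psi / t.
have Hd' := Hd (fun phi => \sum_(i < n) lam i * sstar (s i) phi).
have : t <= beta.
  have <- : \sum_(i < n) lam i * sstar (s i) psi = t.
    rewrite /lam /sstar; under eq_bigr do rewrite mulrAC -expr2.
    rewrite -mulr_suml -/y -{1}(sqr_sqrtr y0) -/t expr2 mulfK //.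
    by rewrite gt_eqF.
  apply: Hd'; exists n, lam, s; split => //.
  rewrite /lam; under eq_bigr do rewrite expr_div_n.
  rewrite -mulr_suml -/y -(sqr_sqrtr y0) -/t divff // sqrf_eq0 gt_eqF //.
move=> tb; rewrite -(sqr_sqrtr y0) -/t.
by rewrite lerXn2r ?nnegrE // ltW.
Qed.

End B2.
Section C.
Variables (R : realType) (Gamma : Type) (S : set (set Gamma)).
Local Notation fs := (fsfun R Gamma).
Local Notation E := {ptws fs -> R}.
Local Notation "'v' phi" := (proj1_sig phi) (at level 10).

Definition Bs : set E := @dual_ball R Gamma S.
Definition NB : set E := [set g : E | forall phi, `|g phi| <= JSnorm S phi].
Definition Lin : set E := [set g : E | lin_functional g].

Lemma NB_compact : compact NB.
Proof.
have H := @tychonoff (Udisc R Gamma) (fun _ => R)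
  (fun phi => `[- JSnorm S phi, JSnorm S phi]%classic) (fun phi => @segment_compact R _ _).
have -> : NB = [set g : E | forall phi : Udisc R Gamma, `[- JSnorm S phi, JSnorm S phi]%classic (g phi)].
  by apply/seteqP; split => g /= Hg phi; have := Hg phi; rewrite /= in_itv /= -ler_norml.
exact: H.
Qed.

Lemma closed_all (I : Type) (A : I -> set E) : (forall i, closed (A i)) ->
  closed [set g : E | forall i, A i g].
Proof.
move=> cA g cg i; apply: (cA i) => W nW.
have [h [Hh Wh]] := cg W nW; by exists h; split => //; exact: Hh.
Qed.

Lemma closed_pre_eq (T : topologicalType) (F : T -> R) : continuous F ->
  closed (F @^-1` [set x : R | x = 0]).
Proof. move=> cF; apply: preimage_closed; [by move=> x _; exact: cF | exact: closed_eq]. Qed.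

Lemma closed_pre_le (T : topologicalType) (F : T -> R) : continuous F ->
  closed (F @^-1` [set x : R | x <= 0]).
Proof. move=> cF; apply: preimage_closed; [by move=> x _; exact: cF | exact: closed_le]. Qed.

Lemma closed_eqT (T : topologicalType) (F1 F2 : T -> R) : continuous F1 -> continuous F2 ->
  closed [set g : T | F1 g = F2 g].
Proof.
move=> c1 c2.
have cF : continuous (fun g : T => F1 g - F2 g) by move=> g; apply: cvgB; [exact: c1 | exact: c2].
suff -> : [set g : T | F1 g = F2 g] = (fun g : T => F1 g - F2 g) @^-1` [set x : R | x = 0].
  exact: (closed_pre_eq cF).
by apply/seteqP; split => g /= H; [rewrite H subrr | apply/eqP; rewrite -subr_eq0; apply/eqP].
Qed.

Lemma closed_leT (T : topologicalType) (F1 F2 : T -> R) : continuous F1 -> continuous F2 ->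
  closed [set g : T | F1 g <= F2 g].
Proof.
move=> c1 c2.
have cF : continuous (fun g : T => F1 g - F2 g) by move=> g; apply: cvgB; [exact: c1 | exact: c2].
suff -> : [set g : T | F1 g <= F2 g] = (fun g : T => F1 g - F2 g) @^-1` [set x : R | x <= 0].
  exact: (closed_pre_le cF).
by apply/seteqP; split => g /=; rewrite subr_le0.
Qed.

Lemma closed_eqE (F1 F2 : E -> R) : continuous F1 -> continuous F2 ->
  closed [set g : E | F1 g = F2 g].
Proof. exact: closed_eqT. Qed.

Lemma closed_imp (T : topologicalType) (P : Prop) (A : set T) : closed A ->
  closed [set g | P -> A g].
Proof.
move=> cA; have [HP|HP] := pselect P.
  suff -> : [set g | P -> A g] = A by [].
  by apply/seteqP; split => g /=; [move=> /(_ HP) | move=> ? _].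
suff -> : [set g | P -> A g] = setT by exact: closedT.
by apply/seteqP; split => g //= _ /HP.
Qed.

Lemma cont_lin (T : topologicalType) (c : R) (F G : T -> R) : continuous F -> continuous G ->
  continuous (fun x => c * F x + G x).
Proof.
move=> cF cG x; apply: cvgD; last exact: cG.
by apply: cvgM; [exact: cvg_cst | exact: cF].
Qed.

Lemma Lin_closed : closed Lin.
Proof.
have -> : Lin = [set g : E | forall i : R * fs * fs * fs,
   [set g : E | (forall a, v i.2 a = i.1.1.1 * v i.1.1.2 a + v i.1.2 a) ->
      [set g : E | g i.2 = i.1.1.1 * g i.1.1.2 + g i.1.2] g] g].
  apply/seteqP; split => g /= Hg.
    by move=> [[[c phi] psi] chi] /=; exact: Hg.
  by move=> c phi psi chi Hchi; exact: (Hg (c, phi, psi, chi) Hchi).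
apply: closed_all => i; apply: closed_imp; apply: closed_eqE; first exact: eval_cont.
apply: cont_lin; exact: eval_cont.
Qed.

Lemma Bs_compact : compact Bs.
Proof.
have -> : Bs = NB `&` Lin by apply/seteqP; split => g [H1 H2]; split.
apply: compact_closedI; [exact: NB_compact | exact: Lin_closed].
Qed.

End C.
Section D.
Variables (R : realType) (Gamma : Type) (S : set (set Gamma)).
Local Notation fs := (fsfun R Gamma).
Local Notation E := {ptws fs -> R}.
Local Notation "'v' phi" := (proj1_sig phi) (at level 10).
Local Notation Bs := (@Bs R Gamma S).

Lemma comb_Bs (J : finType) (P : pred J) (w : J -> R) (k : J -> E) :
  (forall j, P j -> 0 <= w j) -> \sum_(j | P j) w j = 1 ->
  (forall j, P j -> Bs (k j)) ->
  Bs (fun phi => \sum_(j | P j) w j * k j phi).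
Proof.
move=> w0 w1 Hk; split.
  move=> c phi psi chi Hchi; rewrite mulr_sumr -big_split /=.
  apply: eq_bigr => j Pj; have [Hl _] := Hk j Pj.
  by rewrite (Hl c phi psi chi Hchi) mulrDr mulrCA.
move=> phi; apply: le_trans (ler_norm_sum _ _ _) _.
apply: (@le_trans _ _ (\sum_(j | P j) w j * JSnorm S phi)).
  apply: ler_sum => j Pj; rewrite normrM ger0_norm ?w0 //.
  by apply: ler_wpM2l; [exact: w0 | have [_ ->] := Hk j Pj].
by rewrite -mulr_suml w1 mul1r.
Qed.

Lemma ext_comb (f : E) (J : finType) (t : J -> R) (k : J -> E) :
  extreme_point Bs f ->
  (forall j, 0 <= t j) -> \sum_j t j = 1 -> (forall j, Bs (k j)) ->
  f = (fun phi => \sum_j t j * k j phi) ->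
  forall m, 0 < t m -> f = k m.
Proof.
move=> [Bf Hext] t0 t1 Hk Hf m tm.
have Hsplit : \sum_j t j = t m + \sum_(j | j != m) t j by rewrite (bigD1 m).
have [tm1|tm1] := eqVneq (t m) 1.
  have z : forall j, j != m -> t j = 0.
    have : \sum_(j | j != m) t j = 0 by move: Hsplit; rewrite t1 tm1; lra.
    by move/eqP; rewrite psumr_eq0 ?t0 // => /allP H j jm; apply/eqP;
      have := H j (mem_index_enum j); rewrite jm.
  rewrite Hf; apply: funext => phi; rewrite (bigD1 m) //= big1 ?addr0 ?tm1 ?mul1r //.
  by move=> j jm; rewrite z // mul0r.
have tlt1 : t m < 1.
  rewrite lt_neqAle tm1 /=; rewrite -t1 Hsplit lerDl; exact: sumr_ge0.
pose g := fun phi => \sum_(j | j != m) (t j / (1 - t m)) * k j phi.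
have d0 : 0 < 1 - t m by rewrite subr_gt0.
have w0' : forall j, j != m -> 0 <= t j / (1 - t m).
  by move=> j _; apply: divr_ge0 => //; exact: ltW.
have w1' : \sum_(j | j != m) t j / (1 - t m) = 1.
  rewrite -mulr_suml.
  have -> : \sum_(j | j != m) t j = 1 - t m by move: Hsplit; rewrite t1; lra.
  by rewrite divff // gt_eqF.
have Bg : Bs g := comb_Bs w0' w1' (fun j _ => Hk j).
have Hf2 : f = (fun phi => t m * k m phi + (1 - t m) * g phi).
  rewrite Hf; apply: funext => phi; rewrite (bigD1 m) //=; congr (_ + _).
  rewrite /g mulr_sumr; apply: eq_bigr => j _.
  by rewrite mulrA mulrCA divff ?gt_eqF // mulr1.
have := Hext (k m) g (t m) (Hk m) Bg; rewrite tm tlt1 => /(_ isT Hf2) kg.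
by rewrite Hf2 -kg; apply: funext => phi; lra.
Qed.

End D.
Section E.
Variables (R : realType) (Gamma : Type) (S : set (set Gamma)).
Local Notation fs := (fsfun R Gamma).
Local Notation E := {ptws fs -> R}.
Local Notation "'v' phi" := (proj1_sig phi) (at level 10).
Local Notation Bs := (@Bs R Gamma S).

Lemma closed_allT (T : topologicalType) (I : Type) (A : I -> set T) :
  (forall i, closed (A i)) -> closed [set g : T | forall i, A i g].
Proof.
move=> cA g cg i; apply: (cA i) => W nW.
have [h [Hh Wh]] := cg W nW; by exists h; split => //; exact: Hh.
Qed.

Lemma cont_dist (T : topologicalType) (F : T -> R) (c : R) : continuous F ->
  continuous (fun x => `|F x - c|).
Proof.
move=> cF x; apply: cvg_norm; apply: cvgB; [exact: cF | exact: cvg_cst].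
Qed.

Definition CB (c : E) (L : seq fs) (r : R) : set E :=
  [set g : E | forall phi, inl phi L -> `|g phi - c phi| <= r].

Lemma CB_closed c L r : closed (CB c L r).
Proof.
apply: closed_allT => phi; apply: closed_imp.
apply: (@closed_leT R E (fun g : E => `|g phi - c phi|) (fun _ => r)).
  exact: cont_dist (@eval_cont R Gamma phi).
exact: cst_continuous.
Qed.

Section prod.
Variables (J : finType) (cen : J -> E) (L : seq fs) (r : R).

Definition good (m : J) := exists d, @Dset R Gamma S d /\ Ball (cen m) L r d.
Definition Bm (m : J) : set E := Bs `&` CB (cen m) L r.
Local Notation TT := {ptws J -> R}.
Local Notation KK := {ptws J -> E}.
Definition Delta : set TT := [set t : TT | (forall m, 0 <= t m) /\
   (forall m, ~ good m -> t m = 0) /\ \sum_m t m = 1].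
Definition PiB : set KK := [set k : KK | forall m, Bm m (k m)].
Definition PP : set (TT * KK) := Delta `*` PiB.
Definition Psi (p : TT * KK) : E := fun phi => \sum_m p.1 m * p.2 m phi.

Lemma projT_cont (m : J) : continuous (fun t : TT => t m).
Proof. exact: (@proj_continuous J (fun _ => R) m). Qed.

Lemma projK_cont (m : J) : continuous (fun k : KK => k m).
Proof. exact: (@proj_continuous J (fun _ => E) m). Qed.

Lemma Bm_compact m : compact (Bm m).
Proof. apply: compact_closedI; [exact: Bs_compact | exact: CB_closed]. Qed.

Lemma PiB_compact : compact PiB.
Proof. exact: (@tychonoff J (fun _ => E) Bm Bm_compact). Qed.

Lemma Delta_compact : compact Delta.
Proof.
have box : compact [set t : TT | forall m, `[0, 1]%classic (t m)].
  exact: (@tychonoff J (fun _ => R) (fun _ => `[0, 1]%classic) (fun _ => @segment_compact R _ _)).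
apply: (subclosed_compact _ box).
  have -> : Delta = [set t : TT | forall m, 0 <= t m] `&`
     ([set t : TT | forall m, ~ good m -> t m = 0] `&` [set t : TT | \sum_m t m = 1]).
    by apply/seteqP; split => t /= [H1 [H2 H3]].
  apply: closedI; first apply: closed_allT => m.
    apply: (@closed_leT R TT (fun _ => 0) (fun t => t m)); [exact: cst_continuous | exact: projT_cont].
  apply: closedI; first apply: closed_allT => m; first apply: closed_imp.
    apply: (@closed_eqT R TT (fun t => t m) (fun _ => 0)); [exact: projT_cont | exact: cst_continuous].
  apply: (@closed_eqT R TT (fun t => \sum_m t m) (fun _ => 1)); last exact: cst_continuous.
  by apply: cont_sum => m; exact: projT_cont.
move=> t [t0 [_ t1]] m /=; rewrite in_itv /= t0 /= -t1.
by rewrite (bigD1 m) //= lerDl sumr_ge0.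
Qed.

Lemma PP_compact : compact PP.
Proof. exact: compact_setX Delta_compact PiB_compact. Qed.

End prod.
End E.
Section E2.
Variables (R : realType) (Gamma : Type) (S : set (set Gamma)).
Local Notation fs := (fsfun R Gamma).
Local Notation E := {ptws fs -> R}.
Local Notation "'v' phi" := (proj1_sig phi) (at level 10).
Local Notation Bs := (@Bs R Gamma S).
Variables (J : finType) (cen : J -> E) (L : seq fs) (r : R).
Local Notation TT := {ptws J -> R}.
Local Notation KK := {ptws J -> E}.
Local Notation PP := (@PP R Gamma S J cen L r).
Local Notation Psi := (@Psi R Gamma J).

Lemma cont_mul (T : topologicalType) (F G : T -> R) : continuous F -> continuous G ->
  continuous (fun x => F x * G x).
Proof. by move=> cF cG x; apply: cvgM; [exact: cF | exact: cG]. Qed.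

Lemma Psi_coord_cont (phi : fs) : continuous (fun p : TT * KK => Psi p phi).
Proof.
rewrite /Psi; apply: cont_sum => m.
apply: (@cont_mul _ (fun x : TT * KK => x.1 m) (fun x : TT * KK => x.2 m phi)) => p.
  apply: (@continuous_comp _ _ _ fst (fun t : TT => t m)); first exact: cvg_fst.
  exact: projT_cont.
apply: (@continuous_comp _ _ _ (fun p : TT * KK => p.2 m) (fun g : E => g phi)); last exact: eval_cont.
apply: (@continuous_comp _ _ _ snd (fun k : KK => k m)); first exact: cvg_snd.
exact: projK_cont.
Qed.

Lemma Psi_cont : continuous Psi.
Proof.
move=> p.
have FF : Filter (Psi @ nbhs p) by apply: fmap_filter; exact: nbhs_filter.
exact: (proj2 (@pointwise_cvgP (Udisc R Gamma) R (Psi @ nbhs p) (Psi p) FF) (fun phi => @Psi_coord_cont phi p)).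
Qed.

Lemma E_hausdorff : hausdorff_space E.
Proof. exact: (@hausdorff_product (Udisc R Gamma) (fun _ => R) (fun _ => @Rhausdorff R)). Qed.

Lemma PsiP_closed : closed (Psi @` PP).
Proof.
apply: compact_closed; first exact: E_hausdorff.
apply: continuous_compact; last exact: PP_compact.
exact: continuous_subspaceT Psi_cont.
Qed.

End E2.
Section F.
Variables (R : realType) (Gamma : Type) (S : set (set Gamma)).
Local Notation fs := (fsfun R Gamma).
Local Notation E := {ptws fs -> R}.
Local Notation "'v' phi" := (proj1_sig phi) (at level 10).
Local Notation Bs := (@Bs R Gamma S).

Lemma Bs_conv (g h : E) (a b : R) : Bs g -> Bs h -> 0 <= a -> 0 <= b -> a + b = 1 ->
  Bs (fun phi => a * g phi + b * h phi).
Proof.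
move=> [lg ng] [lh nh] a0 b0 ab; split.
  move=> c phi psi chi Hchi; rewrite (lg c phi psi chi Hchi) (lh c phi psi chi Hchi); ring.
move=> phi; apply: le_trans (ler_normD _ _) _.
rewrite !normrM (ger0_norm a0) (ger0_norm b0).
have h1 := ler_wpM2l a0 (ng phi); have h2 := ler_wpM2l b0 (nh phi).
have -> : JSnorm S phi = a * JSnorm S phi + b * JSnorm S phi by rewrite -mulrDl ab mul1r.
exact: lerD.
Qed.

Lemma CB_conv (c g h : E) L r (a b : R) : CB c L r g -> CB c L r h -> 0 <= a -> 0 <= b -> a + b = 1 ->
  CB c L r (fun phi => a * g phi + b * h phi).
Proof.
move=> Hg Hh a0 b0 ab phi Hphi.
have -> : a * g phi + b * h phi - c phi = a * (g phi - c phi) + b * (h phi - c phi).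
  by rewrite !mulrBr addrACA -opprD -mulrDl ab mul1r.
apply: le_trans (ler_normD _ _) _.
rewrite !normrM (ger0_norm a0) (ger0_norm b0).
have h1 := ler_wpM2l a0 (Hg phi Hphi); have h2 := ler_wpM2l b0 (Hh phi Hphi).
rewrite [X in _ <= X](_ : r = a * r + b * r); last by rewrite -mulrDl ab mul1r.
exact: lerD.
Qed.

Definition lcf (L' : seq fs) (a : fs -> R) : Gamma -> R :=
  fun x => \sum_(phi <- L') a phi * v phi x.

Lemma lcf_fin L' a : finite_set [set x | lcf L' a x != 0].
Proof.
elim: L' => [|phi L' IH].
  apply: (sub_finite_set _ (@finite_set0 Gamma)) => x /=.
  by rewrite /lcf big_nil eqxx.
have fU : finite_set ([set x | v phi x != 0] `|` [set x | lcf L' a x != 0]).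
  by rewrite finite_setU; split => //; exact: (proj2_sig phi).
apply: (sub_finite_set _ fU) => x /=.
rewrite /lcf big_cons => H.
have [H0|H0] := eqVneq (v phi x) 0; last by left.
by right; move: H; rewrite H0 mulr0 add0r.
Qed.

Definition lincomb L' a : fs := exist _ (lcf L' a) (lcf_fin L' a).

Lemma lin_zero (g : fs -> R) (z : fs) : lin_functional g -> (forall x, v z x = 0) -> g z = 0.
Proof.
move=> lg z0.
have Hz : forall x, v z x = 1 * v z x + v z x by move=> x; rewrite z0 mul1r addr0.
have H := lg 1 z z z Hz; rewrite mul1r in H; lra.
Qed.

Lemma lin_lc (g : fs -> R) L' a : lin_functional g ->
  g (lincomb L' a) = \sum_(phi <- L') a phi * g phi.
Proof.
move=> lg; elim: L' => [|phi L' IH].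
  by rewrite big_nil; apply: lin_zero => // x; rewrite /= /lcf big_nil.
rewrite big_cons -IH; apply: lg => x /=.
by rewrite /lcf big_cons.
Qed.

End F.
Section G.
Variables (R : realType) (Gamma : Type) (S : set (set Gamma)).
Local Notation fs := (fsfun R Gamma).
Local Notation E := {ptws fs -> R}.
Local Notation "'v' phi" := (proj1_sig phi) (at level 10).
Local Notation Bs := (@Bs R Gamma S).
Variables (J : finType) (cen : J -> E) (L : seq fs) (r : R).
Local Notation TT := {ptws J -> R}.
Local Notation KK := {ptws J -> E}.
Local Notation PP := (@PP R Gamma S J cen L r).
Local Notation Psi := (@Psi R Gamma J).
Local Notation good := (@good R Gamma S J cen L r).
Local Notation Bm := (@Bm R Gamma S J cen L r).

Lemma Psi_conv (p0 p : TT * KK) (s : R) : PP p0 -> PP p -> 0 <= s <= 1 ->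
  exists ps, PP ps /\ Psi ps = (fun phi => (1 - s) * Psi p0 phi + s * Psi p phi).
Proof.
case: p0 => t0 k0; case: p => t k.
move=> [[t00 [t0g t01]] Hk0] [[tt0 [ttg tt1]] Hk] /andP [s0 s1].
rewrite /= in t00 t0g t01 Hk0 tt0 ttg tt1 Hk.
have s0' : 0 <= 1 - s by rewrite subr_ge0.
pose t' : TT := fun m => (1 - s) * t0 m + s * t m.
have t'0 m : 0 <= t' m by apply: addr_ge0; apply: mulr_ge0.
pose k' : KK := fun m => if t' m == 0 then k0 m else
   (fun phi => ((1 - s) * t0 m / t' m) * k0 m phi + (s * t m / t' m) * k m phi).
exists (t', k'); split.
  split.
    split; first exact: t'0.
    split.
      by move=> m gm; rewrite /= /t' (t0g m gm) (ttg m gm) !mulr0 addr0.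
    by rewrite big_split /= -!mulr_sumr t01 tt1 !mulr1 subrK.
  move=> m /=; rewrite /k'; case: eqP => [_|/eqP tn0]; first exact: Hk0.
  have tp : 0 < t' m by rewrite lt_neqAle eq_sym tn0 t'0.
  have w1 : 0 <= (1 - s) * t0 m / t' m by apply: divr_ge0; [apply: mulr_ge0 | exact: ltW].
  have w2 : 0 <= s * t m / t' m by apply: divr_ge0; [apply: mulr_ge0 | exact: ltW].
  have w12 : (1 - s) * t0 m / t' m + s * t m / t' m = 1 by rewrite -mulrDl divff.
  have [B1 C1] := Hk0 m; have [B2 C2] := Hk m.
  split; [exact: Bs_conv | exact: CB_conv].
apply: funext => phi; rewrite /Psi /= mulr_sumr mulr_sumr -big_split /=.
apply: eq_bigr => m _; rewrite /k'; case: eqP => [t'0m|/eqP tn0].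
  have x0 : (1 - s) * t0 m = 0.
    apply/eqP; rewrite eq_le mulr_ge0 // andbT -t'0m /t' lerDl; exact: mulr_ge0.
  have y0 : s * t m = 0.
    apply/eqP; rewrite eq_le mulr_ge0 // andbT -t'0m /t' lerDr; exact: mulr_ge0.
  by rewrite t'0m mul0r !mulrA x0 y0 !mul0r addr0.
rewrite /=; move: tn0; rewrite /t' => tn0; field; exact: tn0.
Qed.

Hypothesis Hcen : forall m, Bs (cen m).
Hypothesis r0 : 0 <= r.
Hypothesis Hcov : forall g, Bs g -> exists m, Ball (cen m) L r g.

Lemma D_sub d : @Dset R Gamma S d -> exists p, PP p /\ Psi p = d.
Proof.
move=> Dd; have Bd := D_in_B Dd.
have [m Hm] := Hcov Bd.
have gm : good m by exists d.
pose t : TT := fun m' => if m' == m then 1 else 0.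
pose k : KK := fun m' => if m' == m then d else cen m'.
exists (t, k); split.
  split.
    split; first by move=> m'; rewrite /= /t; case: (m' == m).
    split.
      by move=> m' gm'; rewrite /= /t; case: (eqVneq m' m) => // em; rewrite em in gm'.
    by rewrite (bigD1 m) //= /t eqxx big1 ?addr0 // => j /negbTE ->.
  move=> m' /=; rewrite /k; case: (eqVneq m' m) => [->|_].
    by split => // phi Hphi; apply: ltW; exact: Hm.
  by split => // phi Hphi; rewrite subrr normr0.
apply: funext => phi; rewrite /Psi /= (bigD1 m) //= /t /k eqxx mul1r big1 ?addr0 //.
by move=> j /negbTE ->; rewrite mul0r.
Qed.

Lemma PP_ne : exists p, PP p.
Proof.
have Dd0 : @Dset R Gamma S (fun phi => \sum_(i < 0) 0 * sstar set0 phi).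
  exists 0%N, (fun _ => 0), (fun _ => set0); split => //; first exact: disj0.
  by rewrite big_ord0.
have [p [Pp _]] := D_sub Dd0.
by exists p.
Qed.

End G.
Section H.
Variables (R : realType) (Gamma : Type) (S : set (set Gamma)).
Local Notation fs := (fsfun R Gamma).
Local Notation E := {ptws fs -> R}.
Local Notation "'v' phi" := (proj1_sig phi) (at level 10).
Local Notation Bs := (@Bs R Gamma S).
Variables (J : finType) (cen : J -> E) (L : seq fs) (r : R).
Local Notation TT := {ptws J -> R}.
Local Notation KK := {ptws J -> E}.
Local Notation PP := (@PP R Gamma S J cen L r).
Local Notation Psi := (@Psi R Gamma J).
Hypothesis Hcen : forall m, Bs (cen m).
Hypothesis r0 : 0 <= r.
Hypothesis Hcov : forall g, Bs g -> exists m, Ball (cen m) L r g.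

Lemma cont_subc (T : topologicalType) (F : T -> R) (c : R) : continuous F ->
  continuous (fun x => F x - c).
Proof. by move=> cF x; apply: cvgB; [exact: cF | exact: cvg_cst]. Qed.

Lemma sq_seq_zero (L' : seq fs) (a : fs -> R) :
  \sum_(phi <- L') a phi * a phi <= 0 -> forall phi, inl phi L' -> a phi = 0.
Proof.
elim: L' => [|phi0 L' IH] //=; rewrite big_cons => H.
have h1 : 0 <= a phi0 * a phi0 by rewrite -expr2 sqr_ge0.
have h2 : 0 <= \sum_(phi <- L') a phi * a phi by apply: sumr_ge0 => phi _; rewrite -expr2 sqr_ge0.
have h3 : a phi0 * a phi0 = 0 by lra.
have h4 : \sum_(phi <- L') a phi * a phi <= 0 by lra.
move=> phi [<-|Hphi]; last exact: IH.
by move/eqP: h3; rewrite mulf_eq0 orbb => /eqP.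
Qed.

Lemma SEP (f : E) : Bs f -> forall L' : seq fs,
  exists p, PP p /\ forall phi, inl phi L' -> Psi p phi = f phi.
Proof.
move=> Bf L'.
pose q := fun p : TT * KK => \sum_(phi <- L') (Psi p phi - f phi) * (Psi p phi - f phi).
have qc : continuous q.
  apply: cont_sum => phi.
  have c1 := @cont_subc _ (fun p : TT * KK => Psi p phi) (f phi) (@Psi_coord_cont R Gamma J phi).
  exact: (@cont_mul R _ _ _ c1 c1).
have [p0 P0 min0] := compact_EVT_min (PP_ne Hcen r0 Hcov) (@PP_compact R Gamma S J cen L r) (continuous_subspaceT qc).
have P0' : PP p0 by exact: set_mem.
pose a phi := f phi - Psi p0 phi.
have C1 : forall p, PP p -> \sum_(phi <- L') a phi * (Psi p phi - Psi p0 phi) <= 0.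
  move=> p Pp; set A := \sum_(phi <- L') _.
  set Bq := \sum_(phi <- L') (Psi p phi - Psi p0 phi) * (Psi p phi - Psi p0 phi).
  rewrite leNgt; apply/negP => Apos.
  have Bq0 : 0 <= Bq by apply: sumr_ge0 => phi _; rewrite -expr2 sqr_ge0.
  have BA : 0 < Bq + A by apply: ltr_wpDl.
  pose s := A / (Bq + A).
  have s0 : 0 < s by apply: divr_gt0.
  have s1 : s <= 1 by rewrite ler_pdivrMr // mul1r lerDr.
  have [ps [Pps Hps]] := Psi_conv P0' Pp (s := s) (introT andP (conj (ltW s0) s1)).
  have := min0 ps (mem_set Pps).
  have -> : q ps = q p0 - 2 * s * A + s * s * Bq.
    rewrite /q Hps /A /Bq !mulr_sumr -sumrB -big_split /=.
    by apply: eq_bigr => phi _; rewrite /a; ring.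
  move=> H.
  have H2 : s * (2 * A) <= s * (s * Bq) by lra.
  rewrite ler_pM2l // in H2.
  have H3 : s * Bq + s * A = A by rewrite -mulrDr /s divfK // gt_eqF.
  have H4 : 0 < s * A by apply: mulr_gt0.
  lra.
pose beta := \sum_(phi <- L') a phi * Psi p0 phi.
have C2 : forall d, @Dset R Gamma S d -> d (lincomb L' a) <= beta.
  move=> d Dd; have [p [Pp Hp]] := D_sub Hcen r0 Hcov Dd.
  have [ld _] := D_in_B Dd.
  rewrite (lin_lc _ _ ld) -Hp.
  have := C1 p Pp; under eq_bigr do rewrite mulrBr.
  by rewrite sumrB subr_le0.
have J1 := sup_D C2.
have [lf nf] := Bf.
have F1 : f (lincomb L' a) = beta + \sum_(phi <- L') a phi * a phi.
  rewrite (lin_lc _ _ lf) /beta -big_split /=.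
  by apply: eq_bigr => phi _; rewrite /a; ring.
have F2 : f (lincomb L' a) <= JSnorm S (lincomb L' a).
  exact: le_trans (ler_norm _) (nf _).
have H : \sum_(phi <- L') a phi * a phi <= 0 by lra.
exists p0; split => // phi Hphi.
have := sq_seq_zero H Hphi; rewrite /a; lra.
Qed.

End H.
Definition Ep (R : realType) (Gamma : Type) : Type := {ptws fsfun R Gamma -> R}.
HB.instance Definition _ (R : realType) (Gamma : Type) := Topological.on (Ep R Gamma).
HB.instance Definition _ (R : realType) (Gamma : Type) := isPointed.Build (Ep R Gamma) (fun _ => 0).

Lemma BcC (R : realType) (Gamma : Type) (S : set (set Gamma)) :
  cover_compact (@Bs R Gamma S : set (Ep R Gamma)).
Proof. rewrite -compact_cover. exact: (@Bs_compact R Gamma S). Qed.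

Theorem lemma2p3 (R : realType) (Gamma : Type) (S : set (set Gamma)) :
  (exists g : Gamma, True) ->
  (forall a : Gamma, S [set a]) ->
  extreme_point (@dual_ball R Gamma S) `<=` wstar_closure (@Dset R Gamma S).
Proof.
move=> _ _ f Hf; rewrite /wstar_closure => W nW.
have [L [e [e0 HW]]] := nbhs_Ball nW.
pose r := e / 3.
have r0 : 0 < r by apply: divr_gt0.
have [D' sD' cov] := @BcC R Gamma S (classicType (Ep R Gamma)) (@Bs R Gamma S)
    (fun g => interior (Ball g L r)) (fun i _ => open_interior _)
    (fun g Bg => ex_intro2 _ _ g Bg (@Ball_nbhs R Gamma g L r r0)).
pose sD := finmap.enum_fset D'.
pose cen : 'I_(size sD) -> {ptws fsfun R Gamma -> R} := fun m => nth (f : classicType (Ep R Gamma)) sD m.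
have Hcen : forall m, @Bs R Gamma S (cen m).
  by move=> m; apply: set_mem; apply: sD'; rewrite /cen; exact: mem_nth.
have Hcov : forall g, @Bs R Gamma S g -> exists m, Ball (cen m) L r g.
  move=> g Bg; have [i Di Ig] := cov g Bg.
  have Hi : (index i sD < size sD)%N by rewrite index_mem.
  exists (Ordinal Hi); rewrite /cen /= nth_index //; exact: interior_subset.
have fB : @Bs R Gamma S f := Hf.1.
have cl : closure (@Psi R Gamma _ @` @PP R Gamma S _ cen L r) f.
  move=> B nB; have [L' [e' [e'0 HB]]] := nbhs_Ball nB.
  have [p [Pp Hp]] := SEP Hcen (ltW r0) Hcov fB L'.
  exists (Psi p); split; first by exists p.
  by apply: HB => phi Hphi; rewrite Hp // subrr normr0.
have [[t k] [[t0 [tg t1]] Pk] fp] := PsiP_closed cl.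
have [[m tm]|Hn] := pselect (exists m, 0 < t m); last first.
  exfalso; have : \sum_m t m <= 0.
    apply: (@le_trans _ _ (\sum_(m < size sD) (0 : R))); last by rewrite big1_eq.
    apply: ler_sum => m _.
    by rewrite leNgt; apply/negP => H; apply: Hn; exists m.
  by rewrite t1 ler10.
have fk := ext_comb Hf t0 t1 (fun m => (Pk m).1) (esym fp) tm.
have gm : good S cen L r m.
  apply: contrapT => ng; have := tg m ng; move/eqP; by rewrite gt_eqF.
have [d [Dd Hd]] := gm.
have CBf : CB (cen m) L r f by rewrite fk; exact: (Pk m).2.
exists d; split => //; apply: HW => phi Hphi.
have h1 := Hd phi Hphi; have h2 := CBf phi Hphi.
have -> : d phi - f phi = (d phi - cen m phi) - (f phi - cen m phi) by ring.
apply: le_lt_trans (ler_normB _ _) _.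
have : r + r < e by rewrite /r; lra.
lra.
Qed.
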